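(* Let the premiums $\{X_n, n\geq 1\}$, the claims $\{Y_n, n\geq 1\}$ and the rates of interest $\{I_n, n\geq 1\}$ be mutually independent sequences of nonnegative i.i.d. random variables with finite expectations. For $u\geq 0$ define $U_0=u$, $U_n=(U_{n-1}+X_n)(1+I_n)-Y_n$ for $n\geq 1$, and $\Psi(u)=\mathbb{P}\big(\bigcup_{n=1}^\infty\{U_n<0\}\big)$. Let $$S_n=\sum_{i=1}^n\Big(\big(Y_i(1+I_i)^{-1}-X_i\big)\prod_{j=1}^{i-1}(1+I_j)^{-1}\Big),\quad n\geq 1,$$ with the empty product equal to $1$. If there exists a positive real number $R$ satisfying $$\mathbb{E}\Big(e^{R\left(Y_1(1+I_1)^{-1}-X_1\right)}\Big)\leq 1,$$ then $\{Z_n=e^{RS_n}, n\geq 1\}$ is a supermartingale (i.e. $\mathbb{E}(Z_{n+1}\mid Z_1,\dots,Z_n)\leq Z_n$ a.s. for all $n$), and $\Psi(u)\leq e^{-Ru}$ for all $u>0$. *)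

(* Defs.v *)
From HB Require Import structures.
From mathcomp Require Import all_boot all_order all_algebra.
From mathcomp Require Import all_classical all_reals all_analysis.
Set Implicit Arguments. Unset Strict Implicit. Unset Printing Implicit Defensive.
Import Order.TTheory GRing.Theory Num.Theory.
Local Open Scope classical_set_scope.
Local Open Scope ring_scope.

Definition mutually_independent {d} {T : measurableType d} {R : realType}
  (P : probability T R) {I : eqType} (F : I -> T -> R) : Prop :=
  (forall i, measurable_fun setT (F i)) /\
  forall (s : seq I) (B : I -> set R), uniq s ->
    (forall i, i \in s -> measurable (B i)) ->
    P (\big[setI/setT]_(i <- s) (F i @^-1` B i)) =
    (\prod_(i <- s) P (F i @^-1` B i))%E.

Definition identically_distributed {d} {T : measurableType d} {R : realType}
  (P : probability T R) (F : nat -> T -> R) : Prop :=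
  forall n (B : set R), measurable B -> P (F n @^-1` B) = P (F 0 @^-1` B).

(* The three sequences collected into one family indexed by (n, k),
   k = 0 : premiums, k = 1 : claims, k = 2 : interest rates. *)
Definition family3 {T : Type} {R : Type} (X Y I : nat -> T -> R)
  (p : nat * 'I_3) : T -> R :=
  if val p.2 == 0%N then X p.1 else if val p.2 == 1%N then Y p.1 else I p.1.

(* Sequences below are indexed from 0: X k, Y k, I k stand for the paper's
   X_{k+1}, Y_{k+1}, I_{k+1}. *)

Fixpoint surplus {T : Type} {R : realType} (X Y I : nat -> T -> R) (u : R)
  (n : nat) (w : T) : R :=
  match n with
  | 0 => u
  | n'.+1 => (surplus X Y I u n' w + X n' w) * (1 + I n' w) - Y n' w
  end.

Definition ruin_prob {d} {T : measurableType d} {R : realType}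
  (P : probability T R) (X Y I : nat -> T -> R) (u : R) : \bar R :=
  P (\bigcup_(n in [set n : nat | (0 < n)%N]) [set w | surplus X Y I u n w < 0]).

Definition Ssum {T : Type} {R : realType} (X Y I : nat -> T -> R)
  (n : nat) (w : T) : R :=
  \sum_(i < n) ((Y i w / (1 + I i w) - X i w) *
                 \prod_(j < i) (1 + I j w)^-1).

Definition gen_sigma {T : Type} {R : realType} (Z : nat -> T -> R) (n : nat)
  : set (set T) :=
  <<s [set A | exists i (B : set R),
        [/\ (1 <= i <= n)%N, measurable B & A = Z i @^-1` B]] >>.

(* {Z_n, n >= 1} is a supermartingale w.r.t. its natural filtration:
   each Z_n is measurable and integrable, and
   E(Z_{n+1} | Z_1..Z_n) <= Z_n a.s., expressed through the defining
   property of conditional expectation: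
   for all A in sigma(Z_1..Z_n), E[Z_{n+1} 1_A] <= E[Z_n 1_A]. *)
Definition supermartingale {d} {T : measurableType d} {R : realType}
  (P : probability T R) (Z : nat -> T -> R) : Prop :=
  (forall n, (0 < n)%N ->
     measurable_fun setT (Z n) /\ P.-integrable setT (EFin \o Z n)) /\
  (forall n, (0 < n)%N -> forall A, gen_sigma Z n A ->
     (\int[P]_(w in A) (Z n.+1 w)%:E <= \int[P]_(w in A) (Z n w)%:E)%E).

(* Main.v *)
Require Import Defs.
From HB Require Import structures.
From mathcomp Require Import all_boot all_order all_algebra.
From mathcomp Require Import all_classical all_reals all_analysis.
From mathcomp Require Import ring lra measurable_realfun lebesgue_integral.
Set Implicit Arguments. Unset Strict Implicit. Unset Printing Implicit Defensive.
Import Order.TTheory GRing.Theory Num.Theory.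
Local Open Scope classical_set_scope.
Local Open Scope ring_scope.

Section indep.
Context d (T : measurableType d) (R : realType) (P : probability T R).
Context (Ix : eqType) (F : Ix -> T -> R).
Hypothesis HF : mutually_independent P F.

Definition gens (J : pred Ix) : set (set T) :=
  [set A | exists i (B : set R), [/\ J i, measurable B & A = F i @^-1` B]].

Definition pis (J : pred Ix) : set (set T) :=
  [set A | exists (s : seq Ix) (B : Ix -> set R),
     [/\ all J s, uniq s, (forall i, measurable (B i)) &
         A = \big[setI/setT]_(i <- s) (F i @^-1` B i)]].

Lemma mem_bigI (s : seq Ix) (A : Ix -> set T) w :
  (\big[setI/setT]_(i <- s) A i) w <-> (forall i, i \in s -> A i w).
Proof.
elim: s => [|a s IH]; first by rewrite big_nil; split.
rewrite big_cons; split.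
  by move=> [Aa /IH H] i; rewrite inE => /orP[/eqP ->|/H].
move=> H; split; first by apply: H; rewrite mem_head.
by apply/IH => i iS; apply: H; rewrite inE iS orbT.
Qed.

Lemma pis_setI J : setI_closed (pis J).
Proof.
move=> _ _ [s1 [B1 [a1 u1 m1 ->]]] [s2 [B2 [a2 u2 m2 ->]]].
exists (undup (s1 ++ s2)).
exists (fun i => (if i \in s1 then B1 i else setT) `&` (if i \in s2 then B2 i else setT)).
split.
- by apply/allP => i; rewrite mem_undup mem_cat => /orP[] h;
    [exact: (allP a1)|exact: (allP a2)].
- exact: undup_uniq.
- by move=> i; apply: measurableI; case: ifP.
apply/seteqP; split => w /=.
  move=> [/mem_bigI h1 /mem_bigI h2]; apply/mem_bigI => i.
  rewrite mem_undup mem_cat => _ /=.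
  by split; case: ifP => // /h1 || case: ifP => // /h2.
move/mem_bigI => h; split; apply/mem_bigI => i iS.
  by have := h i; rewrite mem_undup mem_cat iS /= => /(_ isT) [].
have := h i; rewrite mem_undup mem_cat iS orbT /= => /(_ isT) [_].
by [].
Qed.

Lemma gens_pis J : gens J `<=` pis J.
Proof.
move=> _ [i [B [Ji mB ->]]].
exists [:: i], (fun j => if j == i then B else setT); split => //=.
- by rewrite Ji.
- by move=> j; case: ifP.
by rewrite big_cons big_nil eqxx setIT.
Qed.

Lemma pis_sigma J : pis J `<=` <<s gens J>>.
Proof.
move=> _ [s [B [aJ _ mB ->]]].
elim: s aJ => [|a s IH] /=.
  by rewrite big_nil => _; exact: (@measurableT _ (g_sigma_algebraType (gens J))).
move=> /andP[Ja aJ]; rewrite big_cons.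
apply: (@measurableI _ (g_sigma_algebraType (gens J))); last exact: IH.
by apply: sub_sigma_algebra; exists a, (B a).
Qed.

Lemma gens_meas J : gens J `<=` measurable.
Proof.
move=> _ [i [B [_ mB ->]]].
by rewrite -[X in measurable X]setTI; apply: (HF.1 i).
Qed.

Lemma sigma_meas J : <<s gens J>> `<=` measurable.
Proof.
apply: smallest_sub; first exact: sigma_algebra_measurable.
exact: gens_meas.
Qed.

Local Open Scope ereal_scope.

Lemma PE {A : set T} : measurable A -> P A = (fine (P A))%:E.
Proof. by move=> mA; rewrite fineK// fin_num_measure. Qed.

Lemma pis_indep (J1 J2 : pred Ix) (dis : forall i, J1 i -> J2 i -> False)
  C1 C2 : pis J1 C1 -> pis J2 C2 -> P (C1 `&` C2) = P C1 * P C2.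
Proof.
move=> [s1 [B1 [a1 u1 m1 ->]]] [s2 [B2 [a2 u2 m2 ->]]].
pose B i := if i \in s1 then B1 i else B2 i.
have e1 : \big[setI/setT]_(i <- s1) (F i @^-1` B1 i) =
          \big[setI/setT]_(i <- s1) (F i @^-1` B i).
  by rewrite big_seq_cond [RHS]big_seq_cond; apply: eq_bigr => i /andP[iS _];
    rewrite /B iS.
have e2 : \big[setI/setT]_(i <- s2) (F i @^-1` B2 i) =
          \big[setI/setT]_(i <- s2) (F i @^-1` B i).
  rewrite big_seq_cond [RHS]big_seq_cond; apply: eq_bigr => i /andP[iS _].
  rewrite /B; case: ifP => // iS1.
  by exfalso; apply: (dis i); [exact: (allP a1)|exact: (allP a2)].
have us : uniq (s1 ++ s2).
  rewrite cat_uniq u1 u2 andbT /=; apply/hasPn => i iS2; apply/negP => iS1.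
  by apply: (dis i); [exact: (allP a1)|exact: (allP a2)].
have mB i : measurable (B i) by rewrite /B; case: ifP.
rewrite e1 e2 -big_cat /= (HF.2 _ _ us (fun i _ => mB i)) big_cat /=.
by rewrite (HF.2 _ _ u1 (fun i _ => mB i)) (HF.2 _ _ u2 (fun i _ => mB i)).
Qed.

Lemma indep_lambda (G : set (set T)) (C : set T) : measurable C ->
  setI_closed G -> G `<=` measurable ->
  (forall A, G A -> P (C `&` A) = P C * P A) ->
  forall A, <<s G>> A -> P (C `&` A) = P C * P A.
Proof.
move=> mC GI Gm HG.
suff : <<s G>> `<=` [set A | measurable A /\ P (C `&` A) = P C * P A].
  by move=> H A /H [].
apply: (lambda_system_subset GI) => //; last first.
  by move=> A GA; split; [exact: Gm|exact: HG].
split => //.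
- split => //; by rewrite setIT probability_setT mule1.
- move=> A B BA [mA HA] [mB HB]; split; first exact: measurableD.
  have mCA : measurable (C `&` A) by exact: measurableI.
  have h1 : P (C `&` A) = P ((C `&` A) `\` B) + P ((C `&` A) `&` B) :=
    measureDI P mCA mB.
  have h2 : P A = P (A `\` B) + P (A `&` B) := measureDI P mA mB.
  have -> : C `&` (A `\` B) = (C `&` A) `\` B by rewrite setIDA.
  move: h1 h2 HA HB.
  rewrite -setIA (setIidr BA).
  rewrite (PE mCA) (PE (measurableD mCA mB)) (PE (measurableI _ _ mC mB)).
  rewrite (PE mA) (PE (measurableD mA mB)) (PE mB) (PE mC).
  rewrite -!EFinD -!EFinM => -[k1] [k2] [k3] [k4].
  congr EFin; rewrite k2 mulrDr in k3; lra.
- move=> Fs ndF HFs; split.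
    by apply: bigcup_measurable => n _; case: (HFs n).
  have mF n : measurable (Fs n) by case: (HFs n).
  rewrite setI_bigcupr.
  have h1 : (P \o (fun n => C `&` Fs n)) @ \oo --> P (\bigcup_n (C `&` Fs n)).
    apply: nondecreasing_cvg_mu.
    - by move=> n; exact: measurableI.
    - by apply: bigcup_measurable => n _; exact: measurableI.
    - move=> m n mn; apply/subsetPset; apply: setIS; apply/subsetPset.
      exact: ndF.
  have h2 : (P \o Fs) @ \oo --> P (\bigcup_n Fs n).
    apply: nondecreasing_cvg_mu => //.
    by apply: bigcup_measurable => n _.
  have h3 : (fun n => P C * P (Fs n)) @ \oo --> P C * P (\bigcup_n Fs n).
    by apply: cvgeMl => //; exact: fin_num_measure.
  have e : P \o (fun n => C `&` Fs n) = (fun n => P C * P (Fs n)).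
    by apply/funext => n /=; case: (HFs n).
  rewrite e in h1.
  exact: (cvg_unique _ h1 h3).
Qed.

Lemma indep_sigma (J1 J2 : pred Ix) (dis : forall i, J1 i -> J2 i -> False)
  A1 A2 : <<s gens J1>> A1 -> <<s gens J2>> A2 -> P (A1 `&` A2) = P A1 * P A2.
Proof.
have step1 C1 : pis J1 C1 -> forall A, <<s gens J2>> A ->
    P (C1 `&` A) = P C1 * P A.
  move=> pC1 A sA.
  apply: (@indep_lambda (pis J2)) => //.
  - by apply: sigma_meas; apply: pis_sigma; exact: pC1.
  - exact: pis_setI.
  - by move=> B pB; apply: sigma_meas; apply: pis_sigma; exact: pB.
  - by move=> B pB; exact: (pis_indep dis pC1 pB).
  - exact: (sub_sigma_algebra2 (@gens_pis J2)).
move=> sA1 sA2.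
rewrite setIC muleC.
apply: (@indep_lambda (pis J1)) => //.
- exact: (sigma_meas sA2).
- exact: pis_setI.
- by move=> B /pis_sigma /sigma_meas.
- by move=> B pB; rewrite setIC muleC; apply: step1.
- exact: (sub_sigma_algebra2 (@gens_pis J1)).
Qed.

End indep.

Section TF.
Context d (T : measurableType d) (R : realType) (P : probability T R).
Local Open Scope ereal_scope.

Definition mkRV d' (T' : measurableType d') (f : T -> T')
  (mf : measurable_fun setT f) : {RV P >-> T'} :=
  HB.pack f (isMeasurableFun.Build _ _ _ _ f mf).

Lemma mkRVE d' (T' : measurableType d') (f : T -> T') (mf : measurable_fun setT f) :
  (mkRV mf : T -> T') = f.
Proof. by []. Qed.

Definition indep2 (f g : T -> R) := forall B1 B2 : set R,
  measurable B1 -> measurable B2 ->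
  P (f @^-1` B1 `&` g @^-1` B2) = P (f @^-1` B1) * P (g @^-1` B2).

Lemma TF (f g : {RV P >-> R}) (h : R * R -> \bar R) :
  indep2 f g -> measurable_fun setT h -> (forall z, 0 <= h z) ->
  \int[P]_w h (f w, g w) =
  \int[distribution P f]_x \int[distribution P g]_y h (x, y).
Proof.
move=> ind mh h0.
have mfg : measurable_fun setT (fun w => (f w, g w)).
  by apply/measurable_fun_pair.
pose fg := mkRV mfg.
transitivity (\int[distribution P f \x distribution P g]_z h z); last first.
  exact: (fubini_tonelli1 h mh h0).
transitivity (\int[distribution P fg]_z h z).
  by rewrite ge0_integral_distribution.
apply: eq_measure_integral => A mA _.
apply/esym/product_measure_unique => // B1 B2 mB1 mB2.
Qed.

Lemma prod_le (f g : {RV P >-> R}) : indep2 f g ->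
  (forall w, 0 <= f w)%R -> (forall w, 0 <= g w)%R ->
  \int[P]_w (g w)%:E <= 1 ->
  \int[P]_w (f w * g w)%:E <= \int[P]_w (f w)%:E.
Proof.
move=> ind f0 g0 Eg.
pose h (z : R * R) := (`|z.1| * `|z.2|)%:E.
have mn : measurable_fun [set: R] (fun x : R => `|x|%R) by exact: normr_measurable.
have mh : measurable_fun setT h.
  apply/measurable_EFinP; apply: measurable_funM.
    exact: (measurableT_comp mn measurable_fst).
  exact: (measurableT_comp mn measurable_snd).
have h0 z : 0 <= h z by rewrite lee_fin mulr_ge0.
have -> : \int[P]_w (f w * g w)%:E = \int[P]_w h (f w, g w).
  by apply: eq_integral => w _; rewrite /h /= !ger0_norm.
rewrite (TF ind mh h0).
have mnE : measurable_fun [set: R] (fun x : R => (`|x|)%:E).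
  exact/measurable_EFinP.
have Eg' : \int[distribution P g]_y (`|y|)%:E <= 1.
  rewrite ge0_integral_distribution //=.
  by rewrite (eq_integral (fun w => (g w)%:E)) // => w _; rewrite /= ger0_norm.
have Ef : \int[P]_w (f w)%:E = \int[distribution P f]_x (`|x|)%:E.
  rewrite ge0_integral_distribution //=.
  by apply: eq_integral => w _; rewrite /= ger0_norm.
set c := \int[distribution P g]_y (`|y|)%:E.
have c0 : 0 <= c by apply: integral_ge0.
have -> : \int[distribution P f]_x \int[distribution P g]_y h (x, y) =
          \int[distribution P f]_x (c * (`|x|)%:E).
  apply: eq_integral => x _; rewrite /h /=.
  under eq_integral do rewrite EFinM.
  by rewrite ge0_integralZl_EFin // muleC.
rewrite ge0_integralZl // Ef.
apply: gee_pMl => //; last exact: integral_ge0.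
by rewrite ge0_fin_numE // (le_lt_trans Eg') // ltry.
Qed.

Lemma TF_eq (f g f' g' : {RV P >-> R}) (h : R * R -> \bar R) :
  indep2 f g -> indep2 f' g' ->
  (forall A, measurable A -> P (f @^-1` A) = P (f' @^-1` A)) ->
  (forall A, measurable A -> P (g @^-1` A) = P (g' @^-1` A)) ->
  measurable_fun setT h -> (forall z, 0 <= h z) ->
  \int[P]_w h (f w, g w) = \int[P]_w h (f' w, g' w).
Proof.
move=> i1 i2 ef eg mh h0; rewrite (TF i1 mh h0) (TF i2 mh h0).
transitivity (\int[distribution P f]_x \int[distribution P g']_y h (x, y)).
  apply: eq_integral => x _; apply: eq_measure_integral => A mA _.
  exact: eg.
by apply: eq_measure_integral => A mA _; exact: ef.
Qed.

End TF.

Definition invp {R : realType} (x : R) : R := (1 + `|x|)^-1.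

Lemma invp_meas (R : realType) : measurable_fun setT (@invp R).
Proof.
apply: continuous_measurable_fun => x.
have -> : @invp R = (fun x : R => (1 + `|x|)^-1) by []. apply: cvgV.
  by rewrite gt_eqF // ltr_wpDr.
apply: cvgD; [exact: cvg_cst | exact: norm_continuous].
Qed.

Lemma invpE (R : realType) (x : R) : 0 <= x -> invp x = (1 + x)^-1.
Proof. by move=> x0; rewrite /invp ger0_norm. Qed.

Lemma conv_exp (R : realType) (c t : R) : 0 <= c -> c <= 1 ->
  expR (c * t) <= 1 - c + c * expR t.
Proof.
move=> c0 c1.
have := @convex_expR R (Itv01 c0 c1) t 0.
rewrite !convRE /= mulr0 addr0 expR0 mulr1 => h.
by rewrite addrC.
Qed.

Definition k0 : 'I_3 := @Ordinal 3 0 isT.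
Definition k1 : 'I_3 := @Ordinal 3 1 isT.
Definition k2 : 'I_3 := @Ordinal 3 2 isT.

Section model.
Context d (T : measurableType d) (R : realType) (P : probability T R).
Variables (X Y I : nat -> {RV P >-> R}).
Hypotheses (X0 : forall n w, 0 <= X n w) (Y0 : forall n w, 0 <= Y n w)
  (I0 : forall n w, 0 <= I n w).
Definition Fm := family3 (fun n => X n : T -> R) (fun n => Y n : T -> R)
                         (fun n => I n : T -> R).
Hypothesis HI : mutually_independent P Fm.

Notation TS J := (g_sigma_algebraType (gens Fm J)).

Lemma mF (J : pred (nat * 'I_3)) p : J p -> measurable_fun setT (Fm p : TS J -> R).
Proof.
move=> Jp _ B mB; rewrite setTI; apply: sub_sigma_algebra.
by exists p, B.
Qed.

Lemma mX (J : pred (nat * 'I_3)) i : J (i, k0) -> measurable_fun setT (X i : TS J -> R).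
Proof. exact: mF. Qed.
Lemma mY (J : pred (nat * 'I_3)) i : J (i, k1) -> measurable_fun setT (Y i : TS J -> R).
Proof. exact: mF. Qed.
Lemma mI (J : pred (nat * 'I_3)) i : J (i, k2) -> measurable_fun setT (I i : TS J -> R).
Proof. exact: mF. Qed.

Lemma toT (J : pred (nat * 'I_3)) (f : T -> R) :
  measurable_fun setT (f : TS J -> R) -> measurable_fun setT f.
Proof.
move=> mf _ B mB; rewrite setTI.
apply: (sigma_meas HI (J := J)).
by have := mf measurableT B mB; rewrite setTI.
Qed.

Lemma indep2_of (J1 J2 : pred (nat * 'I_3))
  (dis : forall i, J1 i -> J2 i -> False) (f g : T -> R) :
  measurable_fun setT (f : TS J1 -> R) -> measurable_fun setT (g : TS J2 -> R) ->
  indep2 P f g.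
Proof.
move=> mf mg B1 B2 mB1 mB2; apply: (indep_sigma HI dis).
  by have := mf measurableT B1 mB1; rewrite setTI.
by have := mg measurableT B2 mB2; rewrite setTI.
Qed.

Lemma minv (J : pred (nat * 'I_3)) i : J (i, k2) ->
  measurable_fun setT ((fun w => (1 + I i w)^-1) : TS J -> R).
Proof.
move=> Ji.
have -> : (fun w => (1 + I i w)^-1) = (fun w => invp (I i w)).
  by apply/funext => w; rewrite invpE.
exact: (measurableT_comp (@invp_meas R) (mI Ji)).
Qed.

Variable r : R.
Hypothesis HE : ('E_P[fun w => expR (r * (Y 0%N w / (1 + I 0%N w) - X 0%N w))] <= 1)%E.

Definition cc n w := \prod_(j < n) (1 + I j w)^-1.
Definition SS n w := Ssum (fun n => X n : T -> R) (fun n => Y n : T -> R)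
                          (fun n => I n : T -> R) n w.
Definition ZZ n w := expR (r * SS n w).
Definition VV n w := Y n w / (1 + I n w) - X n w.

Lemma SS_rec n w : SS n.+1 w = SS n w + VV n w * cc n w.
Proof. by rewrite /SS /Ssum big_ord_recr. Qed.

Lemma ZZ_rec n w : ZZ n.+1 w = ZZ n w * expR (cc n w * (r * VV n w)).
Proof. rewrite /ZZ SS_rec mulrDr expRD; congr (_ * expR _); ring. Qed.

Lemma cc01 n w : 0 <= cc n w <= 1.
Proof.
have h j : 0 <= (1 + I j w)^-1 <= 1.
  rewrite invr_ge0 addr_ge0 //= invf_le1 ?lerDl //.
  by rewrite ltr_pwDl.
apply/andP; split.
  by apply: prodr_ge0 => j _; case/andP: (h j).
by apply: prodr_ile1 => j _; exact: h.
Qed.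

Lemma ZZ_ge0 n w : 0 <= ZZ n w.
Proof. exact: expR_ge0. Qed.

Section meas.
Variables (J : pred (nat * 'I_3)) (N : nat).
Hypothesis hJ : forall i k, (i < N)%N -> J (i, k).

Lemma mcc j : (j <= N)%N -> measurable_fun setT (cc j : TS J -> R).
Proof.
move=> jN; rewrite /cc; apply: measurable_prod => k _; apply: minv.
by apply: hJ; exact: (leq_trans (ltn_ord k) jN).
Qed.

Lemma mSS j : (j <= N)%N -> measurable_fun setT (SS j : TS J -> R).
Proof.
move=> jN; rewrite /SS /Ssum; apply: measurable_sum => k _.
have kN : (k < N)%N by exact: (leq_trans (ltn_ord k) jN).
apply: measurable_funM.
  apply: measurable_funB; last by apply: mX; exact: hJ.
  by apply: measurable_funM; [apply: mY; exact: hJ|apply: minv; exact: hJ].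
apply: measurable_prod => l _; apply: minv; apply: hJ.
by apply: ltn_trans kN; exact: ltn_ord.
exact: measurableT.
Qed.

Lemma mZZ j : (j <= N)%N -> measurable_fun setT (ZZ j : TS J -> R).
Proof.
move=> jN.
have h1 := measurable_funM (measurable_cst r) (mSS jN).
have h2 := measurableT_comp (@measurable_expR R) h1.
exact: h2.
Qed.

End meas.

Lemma mq (J : pred (nat * 'I_3)) k : J (k, k1) -> J (k, k2) ->
  measurable_fun setT ((fun w => Y k w * invp (I k w)) : TS J -> R).
Proof.
move=> h1 h2; apply: measurable_funM; first exact: mY.
exact: (measurableT_comp (@invp_meas R) (mI h2)).
Qed.

Definition Jq k := fun p : nat * 'I_3 => (p.1 == k) && (val p.2 != 0%N).

Lemma mqT k : measurable_fun setT (fun w => Y k w * invp (I k w)).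
Proof. by apply: (@toT (Jq k)); apply: mq; rewrite /Jq /= eqxx. Qed.

Definition qq k := mkRV P (mqT k).

Local Open Scope ereal_scope.

Lemma law_q k (A : set R) : measurable A ->
  P (qq k @^-1` A) = \int[P]_w (\1_A (Y k w * invp (I k w)))%:E.
Proof.
move=> mA.
have mqA : measurable (qq k @^-1` A).
  by rewrite -[X in measurable X]setTI; apply: (mqT k).
rewrite -(setIT (qq k @^-1` A)) -integral_indic //.
Qed.

Lemma indep_YI k : indep2 P (Y k) (I k).
Proof.
apply: (@indep2_of (fun p => p == (k, k1)) (fun p => p == (k, k2))).
- by move=> p /eqP -> /eqP [].
- by apply: mY; rewrite /= eqxx.
- by apply: mI; rewrite /= eqxx.
Qed.

Lemma indep_Xq k : indep2 P (X k) (qq k).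
Proof.
apply: (@indep2_of (fun p => p == (k, k0)) (Jq k)).
- by move=> p /eqP -> /andP[].
- by apply: mX; rewrite /= eqxx.
- by apply: mq; rewrite /Jq /= eqxx.
Qed.

Hypothesis idX : identically_distributed P (fun n => X n : T -> R).
Hypothesis idY : identically_distributed P (fun n => Y n : T -> R).
Hypothesis idI : identically_distributed P (fun n => I n : T -> R).

Lemma id_q k A : measurable A -> P (qq k @^-1` A) = P (qq 0 @^-1` A).
Proof.
move=> mA; rewrite !law_q //.
pose h (z : R * R) := ((\1_A (z.1 * invp z.2)%R : R))%:E.
have mh : measurable_fun setT h.
  apply/measurable_EFinP.
  have m1 : measurable_fun setT (fun z : R * R => (z.1 * invp z.2)%R).
    apply: measurable_funM; first exact: measurable_fst.
    exact: (measurableT_comp (@invp_meas R) measurable_snd).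
  have mi : measurable_fun setT (\1_A : R -> R) := measurable_indic mA.
  exact: (measurableT_comp mi m1).
have h0 z : 0 <= h z by rewrite lee_fin indicE.
exact: (TF_eq (indep_YI k) (indep_YI 0) (fun B mB => idY k mB)
  (fun B mB => idI k mB) mh h0).
Qed.

Lemma EV k : \int[P]_w (expR (r * VV k w))%:E <= 1.
Proof.
pose h (z : R * R) := (expR (r * (z.2 - z.1)))%:E.
have mh : measurable_fun setT h.
  apply/measurable_EFinP; apply: (measurableT_comp (@measurable_expR R)).
  apply: measurable_funM; first exact: measurable_cst.
  by apply: measurable_funB; [exact: measurable_snd|exact: measurable_fst].
have h0 z : 0 <= h z by rewrite lee_fin expR_ge0.
have e j : \int[P]_w (expR (r * VV j w))%:E = \int[P]_w h (X j w, qq j w).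
  by apply: eq_integral => w _; rewrite /h /VV /= invpE.
rewrite e (TF_eq (indep_Xq k) (indep_Xq 0) (fun B mB => idX k mB)
  (fun B mB => id_q k mB) mh h0) -e.
by move: HE; rewrite unlock.
Qed.

Lemma step k (A : set T) : <<s gens Fm (fun p : nat * 'I_3 => (p.1 < k)%N)>> A ->
  \int[P]_(w in A) (ZZ k.+1 w)%:E <= \int[P]_(w in A) (ZZ k w)%:E.
Proof.
move=> sA.
pose J1 := fun p : nat * 'I_3 => (p.1 < k)%N.
pose J2 := fun p : nat * 'I_3 => p.1 == k.
have hJ1 : forall i k', (i < k)%N -> J1 (i, k') by [].
pose J1' := fun p : nat * 'I_3 => (p.1 < k.+1)%N.
have hJ1' : forall i k', (i < k.+1)%N -> J1' (i, k') by [].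
have mA : measurable A := sigma_meas HI sA.
have mZ1 : measurable_fun setT (ZZ k.+1) := toT (@mZZ J1' k.+1 hJ1' k.+1 (leqnn _)).
have mZ : measurable_fun setT (ZZ k) := toT (@mZZ J1 k hJ1 k (leqnn k)).
have mc : measurable_fun setT (cc k) := toT (@mcc J1 k hJ1 k (leqnn k)).
have mV2 : measurable_fun setT ((fun w => expR (r * VV k w)) : TS J2 -> R).
  have h1 := measurable_funB (measurable_funM (mY (J:=J2) (i:=k) (eqxx _))
     (minv (J:=J2) (i:=k) (eqxx _))) (mX (J:=J2) (i:=k) (eqxx _)).
  have h2 := measurable_funM (measurable_cst r) h1.
  exact: (measurableT_comp (@measurable_expR R) h2).
have mg := toT mV2.
pose f := fun w => (\1_A w * (ZZ k w * cc k w))%R.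
have mf1 : measurable_fun setT (f : TS J1 -> R).
  have sA' : measurable (A : set (TS J1)) := sA.
  have mi : measurable_fun setT (\1_A : TS J1 -> R) := measurable_indic sA'.
  exact: (measurable_funM mi (measurable_funM (@mZZ J1 k hJ1 k (leqnn k)) (@mcc J1 k hJ1 k (leqnn k)))).
have mfT := toT mf1.
have dis : forall p, J1 p -> J2 p -> False.
  by move=> [i k']; rewrite /J1 /J2 /= => ik /eqP ik'; rewrite ik' ltnn in ik.
have ind : indep2 P f (fun w => expR (r * VV k w)) := indep2_of dis mf1 mV2.
have f0 w : (0 <= f w)%R.
  by rewrite /f indicE mulr_ge0 // mulr_ge0 // ?ZZ_ge0 //; case/andP: (cc01 k w).
have key : \int[P]_w (f w * expR (r * VV k w))%:E <= \int[P]_w (f w)%:E :=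
  @prod_le _ _ _ P (mkRV P mfT) (mkRV P mg) ind f0 (fun w => expR_ge0 _) (EV k).
have eA1 : \int[P]_(w in A) (f w * expR (r * VV k w))%:E =
           \int[P]_w (f w * expR (r * VV k w))%:E.
  rewrite integral_mkcond; apply: eq_integral => w _; rewrite patchE.
  by case: ifPn => // wA; rewrite /f indicE (negbTE wA) !mul0r.
have eA2 : \int[P]_w (f w)%:E = \int[P]_(w in A) (ZZ k w * cc k w)%:E.
  rewrite [RHS]integral_mkcond; apply: eq_integral => w _; rewrite patchE /f indicE.
  by case: ifPn => wA; rewrite ?mul1r ?mul0r.
have mE1 : measurable_fun A (fun w => (ZZ k w * (1 - cc k w))%:E).
  apply: measurable_funTS; apply/measurable_EFinP.
  apply: measurable_funM => //; apply: measurable_funB => //.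
have mE2 : measurable_fun A (fun w => (f w * expR (r * VV k w))%:E).
  by apply: measurable_funTS; apply/measurable_EFinP; apply: measurable_funM.
have mE3 : measurable_fun A (fun w => (ZZ k w * cc k w)%:E).
  by apply: measurable_funTS; apply/measurable_EFinP; apply: measurable_funM.
have pE1 w : A w -> 0 <= (ZZ k w * (1 - cc k w))%:E.
  move=> _; rewrite lee_fin mulr_ge0 ?ZZ_ge0 // subr_ge0.
  by case/andP: (cc01 k w).
have pE2 w : A w -> 0 <= (f w * expR (r * VV k w))%:E.
  by move=> _; rewrite lee_fin mulr_ge0 // expR_ge0.
have pE3 w : A w -> 0 <= (ZZ k w * cc k w)%:E.
  by move=> _; rewrite lee_fin mulr_ge0 ?ZZ_ge0 //; case/andP: (cc01 k w).
have le1 : \int[P]_(w in A) (ZZ k.+1 w)%:E <=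
   \int[P]_(w in A) ((ZZ k w * (1 - cc k w))%:E + (f w * expR (r * VV k w))%:E).
  apply: ge0_le_integral => //.
  - by move=> w _; rewrite lee_fin ZZ_ge0.
  - by apply: measurable_funTS; apply/measurable_EFinP.
  - by apply: emeasurable_funD.
  - move=> w Aw; rewrite -EFinD lee_fin ZZ_rec /f indicE mem_set // mul1r.
    rewrite -mulrA -mulrDr; apply: ler_wpM2l; first exact: ZZ_ge0.
    by case/andP: (cc01 k w) => c0 c1; exact: conv_exp.
apply: (le_trans le1).
rewrite ge0_integralD // eA1.
apply: (le_trans (leeD2l _ key)).
rewrite eA2 -ge0_integralD //.
apply: ge0_le_integral => //.
- by move=> w Aw; rewrite adde_ge0 // ?pE1 ?pE3.
- exact: emeasurable_funD.
- by apply: measurable_funTS; apply/measurable_EFinP.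
- by move=> w _; rewrite -EFinD lee_fin -mulrDr subrK mulr1.
Qed.

Notation Jlt n := (fun p : nat * 'I_3 => (p.1 < n)%N).

Lemma hJlt n : forall i k, (i < n)%N -> Jlt n (i, k).
Proof. by []. Qed.

Lemma mZT n : measurable_fun setT (ZZ n).
Proof. exact: toT (@mZZ (Jlt n) n (@hJlt n) n (leqnn n)). Qed.

Lemma ZZ0 w : ZZ 0 w = 1%R.
Proof. by rewrite /ZZ /SS /Ssum big_ord0 mulr0 expR0. Qed.

Lemma sigTT n : <<s gens Fm (Jlt n)>> setT.
Proof. exact: (@measurableT _ (TS (Jlt n))). Qed.

Lemma EZ_le1 n : \int[P]_w (ZZ n w)%:E <= 1.
Proof.
elim: n => [|n IH].
  under eq_integral do rewrite ZZ0.
  by rewrite integral_cst // mul1e; apply: probability_le1.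
apply: le_trans IH; exact: (@step n setT (@sigTT n)).
Qed.

Lemma super_part : supermartingale P (fun n w => expR (r * Ssum
   (fun n => X n : T -> R) (fun n => Y n : T -> R) (fun n => I n : T -> R) n w)).
Proof.
split.
  move=> n _; split; first exact: mZT.
  apply/integrableP; split; first exact/measurable_EFinP/mZT.
  rewrite (eq_integral (fun w => (ZZ n w)%:E)); last first.
    by move=> w _ /=; rewrite ger0_norm // expR_ge0.
  exact: (le_lt_trans (EZ_le1 n) (ltry _)).
move=> n n0 A gA.
apply: (step (k := n)).
move: A gA; apply: smallest_sub.
  exact: (@sigma_algebra_measurable _ (TS (Jlt n))).
move=> _ [i [B [/andP[_ iN] mB ->]]].
have := (@mZZ (Jlt n) n (@hJlt n) i iN) measurableT B mB.
by rewrite setTI.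
Qed.

Variable u : R.

Definition HH N := \bigcup_(j in [set j | (j < N)%N]) [set w | (u < SS j.+1 w)%R].

Fixpoint WW N w := match N with
  | 0 => 1%R
  | N'.+1 => if w \in HH N' then WW N' w else ZZ N'.+1 w
  end.

Lemma mHH N : <<s gens Fm (Jlt N)>> (HH N).
Proof.
apply: (@bigcup_measurable _ (TS (Jlt N))) => j /= jN.
have m1 := @mSS (Jlt N) N (@hJlt N) j.+1 jN.
have := measurable_fun_ltr (measurable_cst u) m1 (@measurableT _ (TS (Jlt N))).
move=> /(_ [set true]) /=; rewrite setTI; apply => //.
Qed.

Lemma mHHT N : measurable (HH N).
Proof. exact: (sigma_meas HI (@mHH N)). Qed.

Lemma WW_ge0 N w : (0 <= WW N w)%R.
Proof.
elim: N => [|N IH] /=; first exact: ler01.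
by case: ifP => _ //; exact: ZZ_ge0.
Qed.

Lemma WW_notin N w : w \notin HH N -> WW N w = ZZ N w.
Proof.
case: N => [|N] /=; first by rewrite ZZ0.
move=> wN.
have -> : (w \in HH N) = false.
  apply/negbTE; apply: contra wN; rewrite !inE => -[j /= jN h].
  by exists j => //=; exact: ltnW.
by [].
Qed.

Hypothesis r0 : (0 < r)%R.

Lemma WW_in N w : w \in HH N -> (expR (r * u) <= WW N w)%R.
Proof.
elim: N => [|N IH] /=; first by rewrite inE => -[j].
case: ifPn => [/IH //|wN].
rewrite inE => -[j /= jN h].
have jE : j = N.
  apply/eqP; rewrite eqn_leq -ltnS jN /=; rewrite leqNgt; apply/negP => jN'.
  by move/negP: wN; apply; rewrite inE; exists j.
rewrite jE in h.
by rewrite /ZZ ler_expR ler_pM2l // ltW.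
Qed.

Lemma mWW N : measurable_fun setT (WW N).
Proof.
elim: N => [|N IH] /=; first exact: measurable_cst.
have -> : (fun w => if w \in HH N then WW N w else ZZ N.+1 w) =
  (fun w => \1_(HH N) w * WW N w + (1 - \1_(HH N) w) * ZZ N.+1 w)%R.
  apply/funext => w; rewrite indicE; case: ifP => _.
    by rewrite mul1r subrr mul0r addr0.
  by rewrite mul0r subr0 mul1r add0r.
have mi : measurable_fun setT (\1_(HH N) : T -> R) := measurable_indic (mHHT N).
apply: measurable_funD; first exact: measurable_funM.
apply: measurable_funM; last exact: mZT.
by apply: measurable_funB => //; exact: measurable_cst.
Qed.

Lemma EW_le1 N : \int[P]_w (WW N w)%:E <= 1.
Proof.
elim: N => [|N IH] /=.
  by rewrite integral_cst // mul1e; apply: probability_le1.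
apply: le_trans IH.
have mH := mHHT N.
have mHC : measurable (~` HH N) := measurableC mH.
have split_int (g : T -> R) : measurable_fun setT g -> (forall w, 0 <= g w)%R ->
    \int[P]_w (g w)%:E =
    \int[P]_(w in HH N) (g w)%:E + \int[P]_(w in ~` HH N) (g w)%:E.
  move=> mg g0; rewrite -ge0_integral_setU //.
  - by rewrite setUv.
  - by apply: measurable_funTS; exact/measurable_EFinP.
  - by move=> w _; rewrite lee_fin.
  - by rewrite disj_set2E setICr.
rewrite (split_int (WW N.+1) (@mWW N.+1) (@WW_ge0 N.+1)).
rewrite (split_int (WW N) (@mWW N) (@WW_ge0 N)).
apply: leeD.
  rewrite (eq_integral (fun w => (WW N w)%:E)) //.
  by move=> w wH /=; rewrite wH.
rewrite (eq_integral (fun w => (ZZ N.+1 w)%:E)); last first.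
  by move=> w; rewrite in_setC => wH /=; rewrite (negbTE wH).
rewrite [leRHS](eq_integral (fun w => (ZZ N w)%:E)); last first.
  by move=> w; rewrite in_setC => wH /=; rewrite WW_notin.
exact: (@step N (~` HH N) (@measurableC _ (TS (Jlt N)) _ (@mHH N))).
Qed.

Lemma PH_le N : P (HH N) <= (expR (- (r * u)))%:E.
Proof.
have mH := mHHT N.
have h1 : (expR (r * u))%:E * P (HH N) <= 1.
  have mi : measurable_fun setT (fun w => (\1_(HH N) w : R)%:E).
    exact/measurable_EFinP/measurable_indic.
  have i0 : forall w, [set: T] w -> 0 <= (\1_(HH N) w : R)%:E.
    by move=> w _; rewrite lee_fin indicE.
  rewrite -[HH N]setIT -(integral_indic P measurableT mH).
  rewrite -(ge0_integralZl_EFin P measurableT i0 mi (expR_ge0 (r * u))).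
  under eq_integral => w _ do rewrite -EFinM.
  apply: le_trans (EW_le1 N).
  apply: ge0_le_integral => //.
  - apply/measurable_EFinP; apply: measurable_funM; first exact: measurable_cst.
    exact: measurable_indic.
  - exact/measurable_EFinP/mWW.
  - move=> w _; rewrite lee_fin indicE; have [wH|wH] := boolP (w \in HH N).
      by rewrite mulr1; exact: WW_in.
    by rewrite mulr0; exact: WW_ge0.
rewrite (PE P mH) -EFinM lee_fin in h1 *.
rewrite lee_fin expRN -(ler_pM2l (expR_gt0 (r * u))) mulfV ?gt_eqF ?expR_gt0 //.
Qed.

Lemma surplusE n w : surplus (fun n => X n : T -> R) (fun n => Y n : T -> R)
  (fun n => I n : T -> R) u n w = ((\prod_(j < n) (1 + I j w)) * (u - SS n w))%R.
Proof.
elim: n => [|n IH] /=.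
  by rewrite big_ord0 /SS /Ssum big_ord0 subr0 mul1r.
rewrite IH SS_rec big_ord_recr /= /VV /cc.
have pos : (0 < \prod_(j < n) (1 + I j w))%R.
  by apply: prodr_gt0 => j _; rewrite ltr_pwDl.
have In0 : (1 + I n w != 0)%R by rewrite gt_eqF // ltr_pwDl.
rewrite prodfV.
field.
by rewrite In0 gt_eqF.
Qed.

Lemma ruin_set : \bigcup_(n in [set n : nat | (0 < n)%N])
    [set w | (surplus (fun n => X n : T -> R) (fun n => Y n : T -> R)
      (fun n => I n : T -> R) u n w < 0)%R] = \bigcup_N HH N.
Proof.
have key n w : (surplus (fun n => X n : T -> R) (fun n => Y n : T -> R)
      (fun n => I n : T -> R) u n w < 0)%R = (u < SS n w)%R.
  rewrite surplusE pmulr_rlt0 ?subr_lt0 //.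
  by apply: prodr_gt0 => j _; rewrite ltr_pwDl.
apply/seteqP; split => w /=.
  move=> [n /= n0 h]; rewrite key in h.
  exists n => //; exists n.-1 => /=; first by rewrite prednK.
  by rewrite prednK.
move=> [N _ [j /= jN h]]; exists j.+1; first by [].
by move: h; rewrite -key.
Qed.

Lemma ruin_part : ruin_prob P (fun n => X n : T -> R) (fun n => Y n : T -> R)
                  (fun n => I n : T -> R) u <= (expR (- (r * u)))%:E.
Proof.
rewrite /ruin_prob ruin_set.
have ndH : nondecreasing_seq HH.
  move=> m n mn; apply/subsetPset => w [j /= jm h].
  by exists j => //=; exact: leq_trans jm mn.
have mU : measurable (\bigcup_N HH N).
  by apply: bigcup_measurable => N _; exact: mHHT.
have cv := @nondecreasing_cvg_mu _ _ _ P HH (fun N => mHHT N) mU ndH.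
rewrite -(cvg_lim _ cv) //.
apply: lime_le.
  by apply/cvg_ex; eexists; exact: cv.
by apply: nearW => N; exact: PH_le.
Qed.

End model.

Theorem lemma2p4 (d : measure_display) (T : measurableType d) (R : realType)
  (P : probability T R) (X Y I : nat -> {RV P >-> R}) (r : R) :
  (forall n w, 0 <= X n w) -> (forall n w, 0 <= Y n w) ->
  (forall n w, 0 <= I n w) ->
  (forall n, P.-integrable setT (EFin \o X n)) ->
  (forall n, P.-integrable setT (EFin \o Y n)) ->
  (forall n, P.-integrable setT (EFin \o I n)) ->
  mutually_independent P (family3 (fun n => X n : T -> R)
                                  (fun n => Y n : T -> R)
                                  (fun n => I n : T -> R)) ->
  identically_distributed P (fun n => X n : T -> R) ->
  identically_distributed P (fun n => Y n : T -> R) ->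
  identically_distributed P (fun n => I n : T -> R) ->
  0 < r ->
  ('E_P[fun w => expR (r * (Y 0%N w / (1 + I 0%N w) - X 0%N w))] <= 1)%E ->
  supermartingale P (fun n w => expR (r * Ssum (fun n => X n : T -> R)
                                    (fun n => Y n : T -> R)
                                    (fun n => I n : T -> R) n w)) /\
  (forall u : R, 0 < u ->
     (ruin_prob P (fun n => X n : T -> R) (fun n => Y n : T -> R)
                  (fun n => I n : T -> R) u <= (expR (- (r * u)))%:E)%E).
Proof.
move=> X0 Y0 I0 _ _ _ HI idX idY idI r0 HE.
split.
  exact: (super_part I0 HI HE idX idY idI).
move=> u _.
exact: (ruin_part I0 HI HE idX idY idI u r0).
Qed.
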